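(* Let $K$ be a field of characteristic different from $2$, let $c\in K$, let $f=x^2+c\in K[x]$, and let $\alpha\in K$. Assume that the backward orbit $f^{-\infty}(\alpha)=\bigcup_{n\ge 1}(f^n)^{-1}(\alpha)\subseteq\overline{K}$ does not contain $0$ (the unique critical point of $f$ in $\overline{K}$). Define $c_1=-c$ and $c_n=f(c_{n-1})$ for $n\ge 2$, and set $c_{1,\alpha}=c_1+\alpha$ and $c_{n,\alpha}=c_n-\alpha$ for $n\ge 2$. If the Galois group $G_\infty(f,\alpha)$ is abelian and $f-\alpha$ is irreducible over $K$, then the $\mathbb{F}_2$-subspace of $K^{\times}/(K^{\times})^2$ spanned by the classes of the elements $c_{n,\alpha}$, $n\ge 1$, has dimension $1$.
   Context: For $n\ge1$, $f^n$ denotes the $n$-th iterate of $f$, $K_n(f,\alpha)$ the splitting field of $f^n-\alpha$ over $K$, and $K_\infty(f,\alpha)=\bigcup_n K_n(f,\alpha)$. The dynamical Galois group $G_\infty(f,\alpha)$ is the Galois group of $K_\infty(f,\alpha)/K$ (equivalently the inverse limit of the Galois groups of $K_n(f,\alpha)/K$). The hypothesis on the backward orbit ensures $c_{n,\alpha}\neq 0$, so these define classes in $K^\times/(K^\times)^2$, which is viewed as an $\mathbb{F}_2$-vector space. *)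

(* Defs.v *)
From HB Require Import structures.
From mathcomp Require Import all_boot all_order all_algebra all_fingroup all_field.
Set Implicit Arguments. Unset Strict Implicit. Unset Printing Implicit Defensive.
Import GRing.Theory.
Local Open Scope ring_scope.

Section Dyn.
Variable K : fieldType.

Definition fpoly (c : K) : {poly K} := 'X^2 + c%:P.
Definition fiter (c : K) (n : nat) : {poly K} := iter n (fun p => fpoly c \Po p) 'X.

(* critical orbit: crit c n = c_n for n >= 1, with c_1 = -c, c_n = f(c_{n-1}) *)
Definition crit (c : K) (n : nat) : K := iter n.-1 (fun x => x ^+ 2 + c) (- c).
Definition calpha (c alpha : K) (n : nat) : K :=
  if n == 1%N then crit c 1 + alpha else crit c n - alpha.

(* Square classes in K^x / (K^x)^2, viewed as an F_2-vector space (written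
   multiplicatively).  The class of a nonzero x is trivial iff x is a square. *)
Definition is_square (x : K) : Prop := exists y : K, x = y ^+ 2.

(* x (nonzero) lies in the F_2-span of the classes of the family v : nat -> K^x:
   its class is the class of a finite product of the v i. *)
Definition in_sq_span (v : nat -> K) (x : K) : Prop :=
  x != 0 /\ exists (s : seq nat) (t : K), t != 0 /\ x = t ^+ 2 * \prod_(i <- s) v i.

Definition in_sq_span_fin (d : nat) (b : 'I_d -> K) (x : K) : Prop :=
  x != 0 /\ exists (S : {set 'I_d}) (t : K), t != 0 /\ x = t ^+ 2 * \prod_(i in S) b i.

Definition sq_independent (d : nat) (b : 'I_d -> K) : Prop :=
  (forall i, b i != 0) /\
  forall S : {set 'I_d}, S != set0 -> ~ is_square (\prod_(i in S) b i).

Definition sq_span_dim (v : nat -> K) (d : nat) : Prop :=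
  exists b : 'I_d -> K,
    [/\ forall i, in_sq_span v (b i),
        sq_independent b &
        forall n, in_sq_span_fin b (v n)].

End Dyn.

(* Main.v *)
Require Import Defs.
From HB Require Import structures.
From mathcomp Require Import all_boot all_order all_algebra all_fingroup all_field.
From mathcomp Require Import zify ring.
Import GRing.Theory.
Local Open Scope ring_scope.

Section Gen.
Variable F : fieldType.
Implicit Types (c : F) (p : {poly F}).

Lemma fpoly_comp c p : fpoly c \Po p = p ^+ 2 + c%:P.
Proof. by rewrite /fpoly comp_polyD comp_Xn_poly comp_polyC. Qed.

Lemma fiterS c m : fiter c m.+1 = fpoly c \Po fiter c m.
Proof. by []. Qed.

Lemma fiterSr c m : fiter c m.+1 = fiter c m \Po fpoly c.
Proof.
elim: m => [|m IH]; first by rewrite fiterS /fiter /= comp_polyXr comp_polyX.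
by rewrite [LHS]fiterS IH comp_polyA -fiterS -IH.
Qed.

Lemma horner_fiter c m x : (fiter c m).[x] = iter m (fun y => y ^+ 2 + c) x.
Proof.
elim: m => [|m IH]; first by rewrite /fiter /= hornerX.
by rewrite fiterS fpoly_comp !hornerE IH.
Qed.

Lemma fiter_monic c m : fiter c m \is monic /\ size (fiter c m) = (2 ^ m).+1.
Proof.
elim: m => [|m [IHm IHs]]; first by rewrite /fiter /= monicX size_polyX.
have s2 : size (fiter c m ^+ 2) = (2 ^ m.+1).+1.
  have := size_exp (fiter c m) 2; rewrite IHs /= expnS.
  have : size (fiter c m ^+ 2) != 0%N.
    by rewrite size_poly_eq0 expf_neq0 // -size_poly_eq0 IHs.
  case: (size _) => //= k _ ->; lia.
have sc : (size (c%:P) < size (fiter c m ^+ 2))%N.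
  by rewrite size_polyC s2; case: (c != 0); rewrite // expnS; lia.
rewrite fiterS fpoly_comp; split.
  by rewrite monicE lead_coefDl // -monicE monic_exp.
by rewrite size_polyDl.
Qed.

End Gen.
Arguments fpoly_comp {F}.
Arguments fiterS {F}.
Arguments fiterSr {F}.
Arguments horner_fiter {F}.
Arguments fiter_monic {F}.

Lemma map_fiter (F E : fieldType) (f : {rmorphism F -> E}) c m :
  map_poly f (fiter c m) = fiter (f c) m.
Proof.
elim: m => [|m IH]; first by rewrite /fiter /= map_polyX.
by rewrite !fiterS !fpoly_comp rmorphD rmorphXn /= IH map_polyC.
Qed.
Lemma sqrt_const (L : fieldType) (rs : seq L) n (H : {poly L}) :
  size H = n.+1 -> H \Po 'X^2 %| \prod_(r <- rs) ('X - r%:P) ->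
  exists s, H.[0] = lead_coef H * (-1) ^+ n * s ^+ 2.
Proof.
elim: n H => [|n IH] H sH dH.
  have /size_poly1P [a _ ->] : size H == 1%N by rewrite sH.
  by exists 1; rewrite hornerC lead_coefC !expr1n !mulr1.
have H0 : H != 0 by rewrite -size_poly_eq0 sH.
have sG : size (H \Po 'X^2) = (2 * n.+1).+1.
  have := size_comp_poly H 'X^2; rewrite sH size_polyXn /=.
  have : size (H \Po 'X^2) != 0%N.
    by rewrite size_poly_eq0 comp_poly_eq0 ?size_polyXn.
  case: (size _) => //= k _ ->; lia.
have [m Em] := dvdp_prod_XsubC dH.
have := eqp_size Em; rewrite sG.
case Ems: (mask m rs) => [|r rs'].
  by rewrite big_nil size_poly1.
move=> _.
have rr : root (H \Po 'X^2) r.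
  by rewrite (eqp_root Em) Ems root_prod_XsubC mem_head.
rewrite root_comp hornerXn in rr.
have [H' DH] := factor_theorem _ _ rr.
have H'0 : H' != 0 by apply: contraNneq H0 => z; rewrite DH z mul0r.
have sH' : size H' = n.+1.
  by move: sH; rewrite DH size_mul ?polyXsubC_eq0 // size_XsubC addn2 /=; case.
have dH' : H' \Po 'X^2 %| \prod_(r <- rs) ('X - r%:P).
  apply: dvdp_trans dH; rewrite DH comp_polyM; exact: dvdp_mulr.
have [s Hs] := IH H' sH' dH'.
exists (s * r); rewrite DH hornerM Hs lead_coefM lead_coefXsubC hornerXsubC.
rewrite mulr1 sub0r [(-1) ^+ n.+1]exprS exprMn.
ring.

Qed.
Section Q.
Variables (K : fieldType) (L : splittingFieldType K).

Lemma in1P (x : L) : reflect (exists k : K, x = k%:A) (x \in 1%VS).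
Proof.
apply: (iffP (vlineP x 1)) => [[k ->]|[k ->]]; by exists k.
Qed.

Lemma quad_aut (x : L) : x ^+ 2 \in 1%VS -> x \notin 1%VS ->
  exists2 s, s \in ('Gal({:L} / 1%VS))%g & s x = - x.
Proof.
move=> x2 xn1.
have E : ('X - x%:P) * ('X - (-x)%:P) = 'X^2 - (x ^+ 2)%:P.
  by rewrite polyCN opprK polyC_exp -subr_sqr.
have mP : minPoly 1 x %| ('X - x%:P) * ('X - (-x)%:P).
  apply: minPoly_dvdp; last by rewrite rootM root_XsubC eqxx.
  by rewrite E rpredB ?rpredX ?polyOverX ?polyOverC.
have sm : size (minPoly 1 x) = 3%N.
  apply/eqP; rewrite eqn_leq; apply/andP; split.
    by have := dvdp_leq _ mP; rewrite E size_XnsubC //; apply; rewrite -size_poly_eq0 size_XnsubC.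
  rewrite size_minPoly ltnS ltn_neqAle eq_sym adjoin_deg_eq1 xn1 /=.
  have := root_minPoly 1 x; have := monic_minPoly 1 x.
  rewrite -ltnS -size_minPoly => mon rt.
  by apply: root_size_gt1 rt; apply: monic_neq0.
have : minPoly 1 x %= ('X - x%:P) * ('X - (-x)%:P).
  by rewrite -dvdp_size_eqp // E size_XnsubC // sm.
move/eqp_root => R.
have : root (minPoly 1 x) (- x) by rewrite R rootM !root_XsubC eqxx orbT.
move/(normalField_root_minPoly (sub1v _) (normalFieldf _) (memvf x)).
move=> [s sG sx]; exists s => //.
Qed.
End Q.
Arguments in1P {K L x}.
Arguments quad_aut {K L x}.

Section Main.
Variables (K : fieldType) (L : splittingFieldType K).

Lemma map_fiterL (c : K) m :
  map_poly (in_alg L) (fiter c m) = fiter (c%:A : L) m.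
Proof.
elim: m => [|m IH]; first by rewrite /fiter /= map_polyX.
rewrite fiterS map_comp_poly IH [in RHS]fiterS; congr (_ \Po _).
by rewrite /fpoly rmorphD /= map_polyXn map_polyC.
Qed.

Lemma map_fiterLB (c a : K) m :
  map_poly (in_alg L) (fiter c m - a%:P) = fiter (c%:A : L) m - (a%:A)%:P.
Proof.
rewrite -map_fiterL; apply/polyP => i.
rewrite coef_map !coefB coef_map !coefC /=.
by case: (i == 0%N); rewrite scalerBl ?scale0r.
Qed.

Lemma alg_inj (x y : K) : (x%:A : L) = y%:A -> x = y.
Proof.
move/eqP; rewrite -subr_eq0 -scalerBl scaler_eq0 oner_eq0 orbF subr_eq0.
by move/eqP.
Qed.

Lemma algX (x : K) n : (x%:A : L) ^+ n = (x ^+ n)%:A.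
Proof.
elim: n => [|n IH]; first by rewrite !expr0 scale1r.
by rewrite !exprS IH -scalerAl mul1r scalerA.
Qed.

Lemma galA (g : gal_of {:L}) (x : K) : g (x%:A) = x%:A.
Proof. by rewrite rmorph_alg. Qed.
Lemma galMul (g : gal_of {:L}) (u v : L) : g (u * v) = g u * g v.
Proof. exact: rmorphM. Qed.
Lemma galB (g : gal_of {:L}) (u v : L) : g (u - v) = g u - g v.
Proof. exact: rmorphB. Qed.
Lemma galN (g : gal_of {:L}) (u : L) : g (- u) = - g u.
Proof. exact: rmorphN. Qed.
Lemma galX (g : gal_of {:L}) (u : L) n : g (u ^+ n) = g u ^+ n.
Proof. exact: rmorphXn. Qed.
Lemma gal1 (g : gal_of {:L}) : g 1 = 1.
Proof. exact: rmorph1. Qed.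

Lemma two_neq0L : (2%:R : K) != 0 -> (2%:R : L) != 0.
Proof. by move=> h; rewrite -(rmorph_nat (in_alg L)) fmorph_eq0. Qed.

Lemma fixed_in1 (y : L) : (2%:R : K) != 0 ->
  (forall r, r \in ('Gal({:L} / 1%VS))%g -> r y = y) -> y ^+ 2 \in 1%VS -> y != 0 ->
  exists t : K, y = t%:A.
Proof.
move=> h2 fy y2 y0; apply/in1P; apply: contraT => yn.
have [r rG ry] := quad_aut y2 yn.
move: ry; rewrite fy // => /eqP; rewrite -subr_eq0 opprK -mulr2n -mulr_natl mulf_eq0.
by rewrite (negPf (two_neq0L h2)) (negPf y0).
Qed.

Lemma main_layer (c a : K) k :
  (2%:R : K) != 0 ->
  ~ (exists y, a - c = y ^+ 2) ->
  iter k.+1 (fun y => y ^+ 2 + c) (- c) - a != 0 ->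
  splittingFieldFor 1 (map_poly (in_alg L) (fiter c k.+2 - a%:P)) {:L} ->
  abelian ('Gal({:L} / 1%VS))%g ->
  exists t : K, iter k.+1 (fun y => y ^+ 2 + c) (- c) - a = t ^+ 2 \/
                iter k.+1 (fun y => y ^+ 2 + c) (- c) - a = t ^+ 2 * (a - c).
Proof.
set C := iter _ _ _ - a => h2 nsq C0 spl ab.
set cL : L := c%:A.
have Ep : map_poly (in_alg L) (fiter c k.+2 - a%:P) = fiter cL k.+2 - (a%:A)%:P.
  exact: map_fiterLB.
rewrite Ep in spl.
set p := fiter cL k.+2 - _ in spl.
have [rs Hp _] := spl.
have sp : size p = (2 ^ k.+2).+1.
  have [_ sF] := fiter_monic cL k.+2.
  rewrite /p size_polyDl sF // size_polyN size_polyC; case: (_ != 0) => //.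
  by rewrite expnS; lia.
have [r0 rr0] : exists r0, root p r0.
  case: rs Hp => [|r0 rs'] Hp; last first.
    by exists r0; rewrite (eqp_root Hp) root_prod_XsubC mem_head.
  by move: (eqp_size Hp); rewrite big_nil size_poly1 sp; rewrite expnS; lia.
set w := (fiter cL k.+1).[r0].
have hw : w ^+ 2 = (a - c)%:A.
  move: rr0; rewrite /root /p fiterS fpoly_comp !hornerE -/w subr_eq0 => /eqP E.
  by rewrite scalerBl -E /cL addrK.
set F1 := fiter cL k.+1.
have Gd : F1 - w%:P %| \prod_(r <- rs) ('X - r%:P).
  rewrite -(eqp_dvdr _ Hp).
  have -> : p = (F1 - w%:P) * (F1 + w%:P).
    rewrite -subr_sqr -polyC_exp hw /p fiterS fpoly_comp -/F1 scalerBl polyCB.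
    by rewrite /cL; ring.
  exact: dvdp_mulIl.
set q := fiter cL k \Po ('X + cL%:P).
set H := q - w%:P.
have HG : H \Po 'X^2 = F1 - w%:P.
  rewrite /H comp_polyB comp_polyC /q -comp_polyA /F1 fiterSr; congr (_ \Po _ - _).
  by rewrite comp_polyD comp_polyX comp_polyC.
have [qm qs] : q \is monic /\ size q = (2 ^ k).+1.
  have [fm fs] := fiter_monic cL k.
  have s2 : size ('X + cL%:P) = 2%N by rewrite size_XaddC.
  have sq : (size q).-1 = (2 ^ k)%N by rewrite /q size_comp_poly fs s2 muln1.
  have q0 : size q != 0%N.
    by rewrite size_poly_eq0 comp_poly_eq0 ?s2 // -size_poly_eq0 fs.
  split; last by move: q0 sq; case: (size q) => // n _ /= ->.
  by rewrite monicE /q lead_coef_comp ?s2 // lead_coefXaddC (eqP fm) expr1n mulr1.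
have sw : (size (- w%:P) < size q)%N.
  by rewrite size_polyN qs ltnS (leq_trans (size_polyC_leq1 _)) // expn_gt0.
have lH : lead_coef H = 1 by rewrite /H lead_coefDl //; apply/eqP; rewrite -monicE.
have sH : size H = (2 ^ k).+1 by rewrite /H size_polyDl.
have Hd : H \Po 'X^2 %| \prod_(r <- rs) ('X - r%:P) by rewrite HG.
have [sA hsA] := @sqrt_const _ rs _ H sH Hd.
set B := (fiter c k).[c].
have H0 : H.[0] = B%:A - w.
  rewrite /H /q hornerD hornerN hornerC horner_comp hornerD hornerX hornerC add0r.
  by rewrite -map_fiterL /cL -[c%:A]/(in_alg L c) horner_map.
set e : L := (-1) ^+ (2 ^ k).
have he2 : e * e = 1 by rewrite -expr2 -exprM mulnC exprM sqrrN expr1n expr1n.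
have hA : sA ^+ 2 = e * (B%:A - w).
  by rewrite -H0 hsA lH mul1r mulrA he2 mul1r.
have ge : forall g : gal_of {:L}, g e = e.
  by move=> g; rewrite /e galX galN gal1.
have gw : forall g : gal_of {:L}, g w = w \/ g w = - w.
  move=> g; have : g (w ^+ 2) = w ^+ 2 by rewrite hw galA.
  rewrite galX.
  by move/eqP; rewrite eqf_sqr => /orP[/eqP|/eqP]; [left|right].
have wn : w \notin 1%VS.
  apply/negP => /in1P [t wt]; apply: nsq; exists t; apply: alg_inj.
  by rewrite -hw wt expr2 -scalerAl mul1r scalerA -expr2.
have w2 : w ^+ 2 \in 1%VS by rewrite hw; apply/in1P; exists (a - c).
have [s0 s0G s0w] := quad_aut w2 wn.
have cA := ab; rewrite abelianE in cA; move/centsP: cA => cA.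
have comm : forall g h : gal_of {:L}, g \in ('Gal({:L} / 1%VS))%g ->
    h \in ('Gal({:L} / 1%VS))%g -> forall x, g (h x) = h (g x).
  move=> g h gG hG x.
  have E : (g * h = h * g)%g by first [exact: (cA g gG h hG) | exact: esym (cA g gG h hG) | exact: (cA h hG g gG)].
  by rewrite -!galM ?memvf // E.
have gM : forall g h : gal_of {:L}, forall x, (g * h)%g x = h (g x).
  by move=> g h x; rewrite galM ?memvf.
have fixA : forall g : gal_of {:L}, g w = w -> g sA = sA \/ g sA = - sA.
  move=> g gw1; have : g (sA ^+ 2) = sA ^+ 2.
    by rewrite hA galMul ge galB galA gw1.
  by rewrite galX => /eqP; rewrite eqf_sqr => /orP[/eqP|/eqP]; [left|right].
set s := sA * s0 sA.
have CB : C = B ^+ 2 + c - a.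
  by rewrite /C iterSr sqrrN -iterSr iterS /B horner_fiter.
have hs2 : s ^+ 2 = C%:A.
  rewrite /s exprMn -galX hA galMul ge galB galA s0w CB.
  have -> : e * (B%:A - w) * (e * (B%:A - - w)) = (e * e) * ((B%:A) ^+ 2 - w ^+ 2).
    by rewrite opprK subr_sqr; ring.
  rewrite he2 mul1r hw algX -scalerBl; congr (_ *: _); ring.
have fix_s : forall g : gal_of {:L}, g \in ('Gal({:L} / 1%VS))%g -> g w = w -> g s = s.
  move=> g gG gw1; rewrite /s galMul (comm g s0 gG s0G).
  by case: (fixA g gw1) => ->; rewrite ?galN ?mulrNN.
have s0s : s0 s = s \/ s0 s = - s.
  have h : (s0 * s0)%g w = w by rewrite gM s0w galN s0w opprK.
  rewrite /s galMul -gM.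
  by case: (fixA _ h) => ->; [left|right]; rewrite ?mulrN mulrC.
have mov_s : forall g : gal_of {:L}, g \in ('Gal({:L} / 1%VS))%g -> g w = - w -> g (s0 s) = s.
  move=> g gG gw1; rewrite -gM; apply: fix_s; first exact: groupM.
  by rewrite gM s0w galN gw1 opprK.
have C0L : C%:A != 0 :> L by rewrite scaler_eq0 oner_eq0 orbF.
have s_ne0 : s != 0.
  by apply: contraNneq C0L => s0'; rewrite -hs2 s0' expr2 mulr0.
case: s0s => s0s.
  have [t ht] : exists t : K, s = t%:A.
    apply: fixed_in1 h2 _ _ s_ne0.
      move=> g gG; case: (gw g) => gw1; first exact: fix_s.
      by rewrite -[in RHS](mov_s g gG gw1) s0s.
    by rewrite hs2; apply/in1P; exists C.
  by exists t; left; apply: alg_inj; rewrite -hs2 ht algX.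
set u := s * w.
have hu2 : u ^+ 2 = (C * (a - c))%:A.
  by rewrite /u exprMn hs2 hw -scalerAl mul1r scalerA.
have ac0 : a - c != 0.
  by apply/eqP => E; apply: nsq; exists 0; rewrite E expr2 mul0r.
have u0 : u != 0.
  apply/eqP => E; move: hu2; rewrite E expr2 mul0r => /esym/eqP.
  by rewrite scaler_eq0 oner_eq0 orbF mulf_eq0 (negPf C0) (negPf ac0).
have [t ht] : exists t : K, u = t%:A.
  apply: fixed_in1 h2 _ _ u0.
    move=> g gG; rewrite /u galMul; case: (gw g) => gw1; first by rewrite gw1 fix_s.
    have := mov_s g gG gw1; rewrite s0s galN => /eqP; rewrite eqr_oppLR => /eqP ->.
    by rewrite gw1 mulrNN.
  by rewrite hu2; apply/in1P; exists (C * (a - c)).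
have E : C * (a - c) = t ^+ 2 by apply: alg_inj; rewrite -hu2 ht algX.
exists (t / (a - c)); right; rewrite expr_div_n -E; field.
exact: ac0.
Qed.
End Main.

Theorem theorem3p3 (K : fieldType) (c alpha : K) :
  2%N \notin [pchar K] ->
  (* 0 is not in the backward orbit: 0 \notin (f^n)^{-1}(alpha) for all n >= 1 *)
  (forall n : nat, (0 < n)%N -> (fiter c n).[0] != alpha) ->
  (* G_oo(f, alpha) abelian: every finite layer Gal(K_n / K) is abelian *)
  (forall n : nat, (0 < n)%N ->
     exists L : splittingFieldType K,
       splittingFieldFor 1%VS (map_poly (in_alg L) (fiter c n - alpha%:P)) {:L}
       /\ abelian 'Gal({:L} / 1%VS)) ->
  irreducible_poly (fpoly c - alpha%:P) ->
  sq_span_dim (fun n => calpha c alpha n.+1) 1.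
Proof.
move=> hc hb hab hirr.
have h2 : (2%:R : K) != 0.
  by apply: contra hc => /eqP h; rewrite inE /= h eqxx.
have nsq : ~ (exists y, alpha - c = y ^+ 2).
  move=> [y hy]; case: hirr => _ /(_ ('X - y%:P)).
  have Ep : fpoly c - alpha%:P = ('X - y%:P) * ('X + y%:P).
    by rewrite -subr_sqr -polyC_exp -hy /fpoly polyCB; ring.
  rewrite size_XsubC Ep dvdp_mulIl => /(_ isT isT) /eqp_size.
  rewrite size_mul ?polyXsubC_eq0 //; last by rewrite -size_poly_eq0 size_XaddC.
  by rewrite size_XaddC size_XsubC.
have d0 : alpha - c != 0.
  by apply/eqP => E; apply: nsq; exists 0; rewrite E expr2 mul0r.
have v0 : calpha c alpha 1 = alpha - c by rewrite /calpha /crit /= addrC.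
have C0 : forall k, iter k.+1 (fun y => y ^+ 2 + c) (- c) - alpha != 0.
  move=> k; have := hb k.+2 isT; rewrite horner_fiter iterSr subr_eq0.
  by rewrite expr2 mul0r add0r !iterSr sqrrN.
have main : forall k, exists t : K,
    iter k.+1 (fun y => y ^+ 2 + c) (- c) - alpha = t ^+ 2 \/
    iter k.+1 (fun y => y ^+ 2 + c) (- c) - alpha = t ^+ 2 * (alpha - c).
  move=> k; have [L [spl ab]] := hab k.+2 isT.
  exact: (@main_layer K L c alpha k h2 nsq (C0 k) spl ab).
exists (fun _ => alpha - c); split.
- move=> i; split => //; exists [:: 0%N], 1; split; first exact: oner_neq0.
  by rewrite big_seq1 expr1n mul1r v0.
- split => // S SN [y hy]; apply: nsq; exists y; rewrite -hy prodr_const.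
  have : #|S| = 1%N.
    apply/eqP; rewrite eqn_leq; apply/andP; split.
      by have := max_card S; rewrite card_ord.
    by rewrite lt0n cards_eq0.
  by move=> ->; rewrite expr1.
- case => [|k] /=.
    split; first by rewrite v0.
    exists [set: 'I_1], 1; split; first exact: oner_neq0.
    by rewrite prodr_const cardsT card_ord expr1 expr1n mul1r v0.
  have -> : calpha c alpha k.+2 = iter k.+1 (fun y => y ^+ 2 + c) (- c) - alpha.
    by [].
  have [t [ht|ht]] := main k.
    split; first exact: C0.
    exists set0, t; split; last by rewrite big_set0 mulr1.
    by apply: contra (C0 k) => /eqP t0; rewrite ht t0 expr2 mul0r.
  split; first exact: C0.
  exists [set: 'I_1], t; split; last by rewrite prodr_const cardsT card_ord expr1.
  by apply: contra (C0 k) => /eqP t0; rewrite ht t0 expr2 !mul0r.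
Qed.
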